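(* For integers $n_1\ge n_2\ge0$, let $$A(n_1,n_2)=\sum_{i=0}^{n_2}\binom{n_2}{i}\,n_1(n_1-1)\cdots(n_1-i+1),$$ where the $i=0$ term is $1$. Then: - if $n_1\ge2$, $A(n_1,n_2)\le\frac{n_1}{n_1-1}\,n_1^{n_2}$; - if $n_2\ge4$, $A(n_1,n_2)\le n_1^{n_2}$. *)

(* Defs.v *)
From mathcomp Require Import all_boot all_order all_algebra.
Set Implicit Arguments. Unset Strict Implicit. Unset Printing Implicit Defensive.

Definition A (n1 n2 : nat) : nat := \sum_(0 <= i < n2.+1) 'C(n2, i) * n1 ^_ i.

(* Main.v *)
Require Import Defs.
From mathcomp Require Import all_boot all_order all_algebra.
From mathcomp Require Import zify.
Import Order.TTheory GRing.Theory Num.Theory.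

Lemma ffact_le_exp n i : (n ^_ i <= n ^ i)%N.
Proof.
elim: i n => [|i IH] n; first by rewrite ffactn0 expn0.
rewrite ffactnS expnS leq_mul2l; apply/orP; right.
apply: leq_trans (IH n.-1) _.
case: i {IH} => [|i]; first by rewrite !expn0.
by rewrite leq_exp2r // leq_pred.
Qed.

Lemma A_le k m : (A k m <= k.+1 ^ m)%N.
Proof.
rewrite /A big_mkord (_ : k.+1 = 1 + k)%N // expnDn.
apply: leq_sum => i _.
by rewrite exp1n mul1n leq_mul2l ffact_le_exp orbT.
Qed.

Lemma A_rec k m : A k.+1 m.+1 = (A k.+1 m + k.+1 * A k m)%N.
Proof.
rewrite /A big_nat_recl //= bin0 ffactn0.
under eq_bigr => i _ do rewrite binS mulnDl ffactSS.
rewrite big_split /= addnA; congr addn.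
  rewrite big_nat_recr //= bin_small // mul0n addn0.
  rewrite [in RHS]big_nat_recl // bin0 ffactn0; congr addn.
rewrite big_distrr /=.
by apply: eq_bigr => i _; rewrite mulnCA.
Qed.

Lemma part1 k m : (A k.+1 m * k + 1 <= k.+1 ^ m.+1)%N.
Proof.
elim: m => [|m IH].
  by rewrite /A big_nat1 bin0 ffactn0 expn1; lia.
rewrite A_rec mulnDl.
have := A_le k m => H.
have H2 : (k.+1 * A k m * k <= k * k.+1 ^ m.+1)%N.
  rewrite expnS; set P := k.+1 ^ m; set Q := A k m in H *; nia.
rewrite [k.+1 ^ m.+2]expnS.
nia.
Qed.

Lemma A4 k : (A k.+4 4 <= k.+4 ^ 4)%N.
Proof.
rewrite /A !big_nat_recr //= big_geq // !ffactSS !ffactn0 /=.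
rewrite bin0 binn (_ : 'C(4,1) = 4) // (_ : 'C(4,2) = 6) // (_ : 'C(4,3) = 4) //. nia.
Qed.

Lemma part2 m : (4 <= m)%N -> forall n, (m <= n)%N -> (A n m <= n ^ m)%N.
Proof.
elim: m => [|j IH] //.
rewrite leq_eqVlt; case/orP => [/eqP Ej|Hj] n Hn.
  have Ej' : j = 3 by case: Ej.
  subst j.
  have [k ->] : exists k, n = k.+4 by exists (n - 4); lia.
  exact: A4.
case: n Hn => [|k] // Hk.
rewrite A_rec.
have H1 := IH Hj k.+1 (ltnW Hk).
have H2 := IH Hj k Hk.
case: j Hj IH H1 H2 {Hk} => [|j] // _ _ H1 H2.
have H3 : (k ^ j.+1 <= k * k.+1 ^ j)%N.
  rewrite expnS leq_mul2l; case: (j) => [|i]; rewrite ?expn0 ?leq_exp2r ?leqnSn ?orbT //.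
rewrite [k.+1 ^ j.+2]expnS [k.+1 ^ j.+1]expnS in H1 *.
nia.
Qed.

Theorem mainTheorem4 (n1 n2 : nat) (h : (n2 <= n1)%N) :
  ((2 <= n1)%N ->
     ((A n1 n2)%:R : rat) <= (n1%:R / (n1.-1)%:R) * (n1 ^ n2)%:R)%R
  /\ ((4 <= n2)%N -> (A n1 n2 <= n1 ^ n2)%N).
Proof.
split; last by move=> H; apply: part2.
case: n1 h => [|k] // _ Hk /=.
have Hk0 : (0 < k%:R :> rat)%R by rewrite ltr0n; lia.
rewrite mulrAC ler_pdivlMr // -!natrM ler_nat.
have := part1 k n2; rewrite expnS; lia.
Qed.
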